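(* In the basic function field $F=K(x,y)$, set $R=y/x^{q^k}$ and $S=y^{q^j}/x$. There exists a unique element $u\in F$ such that $$R=\mathrm{Tr}_k(u)+\alpha\quad\text{and}\quad S=-\mathrm{Tr}_j(u).$$ Moreover $K(u)=K(R,S)$ and $F=K(x,y)=K(x,u)=K(u,y)$.
   Context: Standing setup: $p$ is a prime, $q$ a power of $p$, $n\ge2$, $\ell=q^n$, and $K$ is either $\mathbb{F}_\ell$ or its algebraic closure $\overline{\mathbb{F}}_\ell$. For $a\ge1$, $\mathrm{Tr}_a(T)=T+T^q+\cdots+T^{q^{a-1}}$. Fix integers $j,k\ge1$ with $n=j+k$, $\gcd(j,k)=1$ and $p\nmid j$, and let $\alpha\in\mathbb{F}_p$ be the inverse of $j$ modulo $p$. The basic function field is $F=K(x,y)$ where $x$ is transcendental over $K$ and $y$ is algebraic over $K(x)$ with $\mathrm{Tr}_j(y/x^{q^k})+\mathrm{Tr}_k(y^{q^j}/x)=1$. *)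

(* Defs.v *)
From HB Require Import structures.
From mathcomp Require Import all_boot all_order all_algebra.
Set Implicit Arguments. Unset Strict Implicit. Unset Printing Implicit Defensive.
Import GRing.Theory.
Local Open Scope ring_scope.

Definition Tr (R : nzRingType) (q a : nat) (z : R) : R :=
  \sum_(i < a) z ^+ (q ^ i)%N.

Definition is_Fell_or_closure (ell : nat) (K : fieldType) : Prop :=
  (exists s : seq K, [/\ uniq s, size s = ell & forall a : K, a \in s])
  \/ (GRing.closed_field_axiom K /\
      forall a : K, exists m : nat, (0 < m)%N /\ a ^+ (ell ^ m)%N = a).

(* K(gens): the smallest subfield of F containing iota(K) and gens. *)
Definition in_gen_field (K F : fieldType) (iota : {rmorphism K -> F})
    (gens : seq F) (z : F) : Prop :=
  forall P : F -> Prop,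
    (forall c : K, P (iota c)) ->
    (forall g, g \in gens -> P g) ->
    (forall a b, P a -> P b -> P (a - b)) ->
    (forall a b, P a -> P b -> P (a * b)) ->
    (forall a, P a -> P a^-1) ->
    P z.

Definition transcendental_over (K F : fieldType) (iota : {rmorphism K -> F})
    (x : F) : Prop :=
  forall f : {poly K}, (map_poly iota f).[x] = 0 -> f = 0.

(* Main.v *)
Require Import Defs.
From HB Require Import structures.
From mathcomp Require Import all_boot all_order all_algebra.
From mathcomp Require Import zify.
Import GRing.Theory.
Local Open Scope ring_scope.

Definition frobq (F : fieldType) (q : nat) :=
  forall i (a b : F), (a + b) ^+ (q ^ i)%N = a ^+ (q ^ i)%N + b ^+ (q ^ i)%N.

Section A.
Context (F : fieldType) (q : nat) (q0 : (0 < q)%N) (hD : frobq F q).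

Lemma fr0 i : (0 : F) ^+ (q ^ i)%N = 0.
Proof. by rewrite expr0n expn_eq0 eqn0Ngt q0. Qed.

Lemma frN i (a : F) : (- a) ^+ (q ^ i)%N = - a ^+ (q ^ i)%N.
Proof.
apply/eqP; rewrite -subr_eq0 opprK addrC -hD subrr fr0 //.
Qed.

Lemma frB i (a b : F) : (a - b) ^+ (q ^ i)%N = a ^+ (q ^ i)%N - b ^+ (q ^ i)%N.
Proof. by rewrite hD frN. Qed.

Lemma frsum i a (f : 'I_a -> F) :
  (\sum_(l < a) f l) ^+ (q ^ i)%N = \sum_(l < a) (f l) ^+ (q ^ i)%N.
Proof.
elim: a f => [|a IH] f; first by rewrite !big_ord0 fr0.
by rewrite !big_ord_recr /= hD IH.
Qed.

Lemma TrD a (u v : F) : Tr q a (u + v) = Tr q a u + Tr q a v.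
Proof. rewrite /Tr -big_split /=; apply: eq_bigr => l _; exact: hD. Qed.

Lemma TrN a (u : F) : Tr q a (- u) = - Tr q a u.
Proof. rewrite /Tr -sumrN; apply: eq_bigr => l _; exact: frN. Qed.

Lemma TrB a (u v : F) : Tr q a (u - v) = Tr q a u - Tr q a v.
Proof. by rewrite TrD TrN. Qed.

Lemma Tr0 a : Tr q a (0 : F) = 0.
Proof. by rewrite /Tr big1 // => l _; rewrite fr0. Qed.

Lemma TrF a m (z : F) : Tr q a (z ^+ (q ^ m)%N) = (Tr q a z) ^+ (q ^ m)%N.
Proof.
rewrite /Tr frsum; apply: eq_bigr => l _; by rewrite -!exprM mulnC.
Qed.

Lemma Tr_split a b (z : F) : Tr q (a + b) z = Tr q a z + (Tr q b z) ^+ (q ^ a)%N.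
Proof.
rewrite /Tr big_split_ord /= frsum; congr (_ + _).
by apply: eq_bigr => l _; rewrite -exprM -expnD addnC.
Qed.

Lemma Tr1 (z : F) : Tr q 1 z = z.
Proof. by rewrite /Tr big_ord1 expn0 expr1. Qed.

Lemma Pexp (P : F -> Prop) :
  (forall a b, P a -> P b -> P (a * b)) -> forall z, P z -> forall n, P (z ^+ n.+1).
Proof. move=> hm z hz; elim=> [|n IH]; first by rewrite expr1. by rewrite exprS; apply: hm. Qed.

Lemma Pfr (P : F -> Prop) :
  (forall a b, P a -> P b -> P (a * b)) -> forall z, P z -> forall m, P (z ^+ (q ^ m)%N).
Proof. move=> hm z hz m; have hq : (0 < q ^ m)%N by rewrite expn_gt0 q0.
rewrite -(prednK hq); exact: Pexp. Qed.

Lemma ex_sol n : forall j k, (j + k <= n)%N -> (0 < j)%N -> (0 < k)%N -> coprime j k ->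
  forall r s : F, Tr q j r = Tr q k s ->
  exists u, [/\ Tr q k u = r, Tr q j u = s &
    forall P : F -> Prop, (forall a b, P a -> P b -> P (a - b)) ->
      (forall a b, P a -> P b -> P (a * b)) -> P r -> P s -> P u].
Proof.
elim: n => [|n IH] j k hn hj hk hc r s hrs.
  by move: hn; rewrite leqn0 addn_eq0 => /andP[/eqP Hj _]; rewrite Hj in hj.
case: (ltngtP j k) => hjk.
-
  have Ek : k = ((k - j) + j)%N by rewrite subnK // ltnW.
  set m := (k - j)%N in Ek.
  have hm : (0 < m)%N by rewrite subn_gt0.
  have hc' : coprime j m.
    by move: hc; rewrite Ek /coprime gcdnDr.
  have hrs' : Tr q j (r - s ^+ (q ^ m)%N) = Tr q m s.
    rewrite TrB TrF hrs Ek Tr_split; by rewrite addrK.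
  have [|u [h1 h2 hP]] := IH j m _ hj hm hc' _ _ hrs'.
    by move: hn; rewrite Ek; lia.
  exists u; split => //.
    by rewrite Ek Tr_split h1 h2 subrK.
  move=> P hs hm' Pr Ps; apply: hP => //; apply: hs => //; exact: Pfr.
-
  have Ej : j = ((j - k) + k)%N by rewrite subnK // ltnW.
  set m := (j - k)%N in Ej.
  have hm : (0 < m)%N by rewrite subn_gt0.
  have hc' : coprime m k.
    by rewrite coprime_sym; move: hc; rewrite Ej coprime_sym /coprime gcdnDr.
  have hrs' : Tr q m r = Tr q k (s - r ^+ (q ^ m)%N).
    rewrite TrB TrF -hrs Ej Tr_split; by rewrite addrK.
  have [|u [h1 h2 hP]] := IH m k _ hm hk hc' _ _ hrs'.
    by move: hn; rewrite Ej; lia.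
  exists u; split => //.
    by rewrite Ej Tr_split h1 h2 subrK.
  move=> P hs hm' Pr Ps; apply: hP => //; apply: hs => //; exact: Pfr.
- subst k; move: hc; rewrite /coprime gcdnn => /eqP Hj; subst j.
  move: hrs; rewrite !Tr1 => ->; exists s; split => //; by rewrite Tr1.
Qed.

End A.

Lemma frq1 (F : fieldType) q (q0 : (0 < q)%N) (hD : frobq F q) a (w : F) :
  Tr q a w = 0 -> w ^+ (q ^ a)%N = w.
Proof.
move=> h.
have e1 := Tr_split _ _ q0 hD a 1 w.
have e2 := Tr_split _ _ q0 hD 1 a w.
rewrite addnC in e2; rewrite e2 h (fr0 _ _ q0) addr0 Tr1 in e1.
by move: e1; rewrite add0r => <-.
Qed.

Lemma frit (F : fieldType) q a (w : F) : w ^+ (q ^ a)%N = w -> forall c, w ^+ (q ^ (a * c))%N = w.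
Proof.
move=> h; elim=> [|c IH]; first by rewrite muln0 expn0 expr1.
by rewrite mulnS expnD exprM h IH.
Qed.

Lemma uniq0 (F : fieldType) q (q0 : (0 < q)%N) (hD : frobq F q) j k (w : F) :
  (0 < j)%N -> coprime j k -> j%:R != 0 :> F ->
  Tr q j w = 0 -> Tr q k w = 0 -> w = 0.
Proof.
move=> hj hc hjn hTj hTk.
have wj := frq1 _ _ q0 hD _ _ hTj; have wk := frq1 _ _ q0 hD _ _ hTk.
have [a _ ha] := Bezoutl k hj.
rewrite (eqP hc) in ha.
have E : (1 + a * k = j * ((1 + a * k) %/ j))%N by rewrite [(j * _)%N]mulnC divnK.
have wq : w ^+ q = w.
  have := frit _ _ _ _ wj ((1 + a * k) %/ j); rewrite -E addnC expnD exprM mulnC.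
  by rewrite (frit _ _ _ _ wk) expn1.
have wi : forall i, w ^+ (q ^ i)%N = w.
  by elim=> [|i IH]; rewrite ?expn0 ?expr1 // expnS exprM wq.
move: hTj; rewrite /Tr (eq_bigr (fun _ => w)) ?sumr_const ?card_ord; last by move=> l _; exact: wi.
by rewrite -mulr_natl => /eqP; rewrite mulf_eq0 (negbTE hjn) /= => /eqP.
Qed.

Lemma Psum (F : fieldType) q (P : F -> Prop) :
  P 0 -> (forall a b, P a -> P b -> P (a - b)) -> (forall a b, P a -> P b -> P (a * b)) ->
  (0 < q)%N -> forall z, P z -> forall a, P (Tr q a z).
Proof.
move=> P0 hs hm q0 z hz.
have hadd : forall x y, P x -> P y -> P (x + y).
  move=> x y hx hy; have -> : x + y = x - (0 - y) by rewrite sub0r opprK.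
  by apply: (hs) => //; apply: (hs).
elim=> [|a IH]; first by rewrite /Tr big_ord0.
rewrite /Tr big_ord_recr /=; apply: hadd => //; exact: Pfr.
Qed.

Theorem proposition2p2
  (p e j k : nat) (K F : fieldType) (iota : {rmorphism K -> F}) (x y : F) :
  prime p -> (0 < e)%N ->
  let q := (p ^ e)%N in
  let n := (j + k)%N in
  let ell := (q ^ n)%N in
  (2 <= n)%N -> (1 <= j)%N -> (1 <= k)%N ->
  coprime j k -> ~~ (p %| j)%N ->
  p \in [pchar K] ->
  is_Fell_or_closure ell K ->
  transcendental_over iota x ->
  Tr q j (y / x ^+ (q ^ k)%N) + Tr q k (y ^+ (q ^ j)%N / x) = 1 ->
  (forall z : F, in_gen_field iota [:: x; y] z) ->
  let alpha : F := (j%:R)^-1 in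
  let R := y / x ^+ (q ^ k)%N in
  let S := y ^+ (q ^ j)%N / x in
  exists u : F,
    [/\ R = Tr q k u + alpha /\ S = - Tr q j u,
        (forall v : F, R = Tr q k v + alpha /\ S = - Tr q j v -> v = u),
        (forall z : F, in_gen_field iota [:: u] z <-> in_gen_field iota [:: R; S] z),
        (forall z : F, in_gen_field iota [:: x; u] z)
      & (forall z : F, in_gen_field iota [:: u; y] z)].
Proof.
move=> hp he q n ell hn hj hk hc hpj hpK _ htr HT hgen alpha R S.
have hpF : p \in [pchar F] := rmorph_pchar iota hpK.
have q0 : (0 < q)%N by rewrite /q expn_gt0 prime_gt0.
have hD : frobq F q.
  move=> i a b; apply: exprDn_pchar.
  by rewrite /q -expnM pnatX (pnatE _ (pcharf_prime hpF)) hpF.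
have hjn : j%:R != 0 :> F by rewrite -(dvdn_pcharf hpF).
have HT' : Tr q j R + Tr q k S = 1 := HT.
have natfr : forall i c, (c%:R : F) ^+ (q ^ i)%N = c%:R.
  move=> i; elim=> [|c IH]; first by rewrite (fr0 _ _ q0).
  by rewrite -addn1 natrD hD IH expr1n.
have Talpha : Tr q j alpha = 1.
  rewrite /Tr (eq_bigr (fun _ => alpha)) ?sumr_const ?card_ord; last first.
    by move=> l _; rewrite /alpha exprVn natfr.
  by rewrite -mulr_natl /alpha mulfV.
have comp : Tr q j (R - alpha) = Tr q k (- S).
  rewrite (TrB _ _ q0 hD) (TrN _ _ q0 hD) Talpha -HT'.
  by rewrite opprD addrA subrr add0r.
have [u [h1 h2 hP]] := ex_sol _ _ q0 hD n j k (leqnn n) hj hk hc _ _ comp.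
have PP : forall P : F -> Prop, (forall c, P (iota c)) ->
    (forall a b, P a -> P b -> P (a - b)) -> (forall a b, P a -> P b -> P (a * b)) ->
    (forall a, P a -> P a^-1) -> P u -> P R /\ P S.
  move=> P hc' hs hm hi Pu.
  have P0 : P 0 by rewrite -(rmorph0 iota).
  have Pa : P alpha by have -> : alpha = iota (j%:R^-1) by rewrite fmorphV rmorph_nat.
  have Pk := Psum _ _ P P0 hs hm q0 _ Pu k.
  have Pj := Psum _ _ P P0 hs hm q0 _ Pu j.
  split.
    have -> : R = Tr q k u - (0 - alpha) by rewrite sub0r opprK h1 subrK.
    by apply: (hs) => //; apply: (hs).
  have -> : S = 0 - Tr q j u by rewrite sub0r h2 opprK.
  exact: hs.
have PU : forall P : F -> Prop, (forall c, P (iota c)) ->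
    (forall a b, P a -> P b -> P (a - b)) -> (forall a b, P a -> P b -> P (a * b)) ->
    (forall a, P a -> P a^-1) -> P R -> P S -> P u.
  move=> P hc' hs hm hi PR PS.
  have P0 : P 0 by rewrite -(rmorph0 iota).
  have Pa : P alpha by have -> : alpha = iota (j%:R^-1) by rewrite fmorphV rmorph_nat.
  apply: hP => //; first exact: hs.
  by rewrite -sub0r; exact: hs.
have x0 : x != 0.
  apply/eqP => x0; have := htr 'X; rewrite map_polyX hornerX x0 => /(_ erefl) /eqP.
  by rewrite polyX_eq0.
have y0 : y != 0.
  apply/eqP => y0; move: HT'; rewrite /R /S y0 mul0r expr0n expn_eq0 eqn0Ngt q0 /= mul0r.
  by rewrite !(Tr0 _ _ q0) addr0 => /eqP; rewrite eq_sym oner_eq0.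
exists u; split.
- by rewrite h1 subrK h2 opprK.
- move=> v [hv1 hv2]; apply/eqP; rewrite -subr_eq0; apply/eqP.
  apply: (uniq0 _ _ q0 hD _ _ _ hj hc hjn).
    by rewrite (TrB _ _ q0 hD) h2 hv2 opprK subrr.
  by rewrite (TrB _ _ q0 hD) h1 hv1 addrK subrr.
- move=> z; split => Hz P hc' hg hs hm hi.
    apply: Hz => // g; rewrite inE => /eqP ->.
    by apply: PU => //; apply: hg; rewrite !inE eqxx ?orbT.
  have Pu : P u by apply: hg; rewrite inE.
  have [PR PS] := PP P hc' hs hm hi Pu.
  by apply: Hz => // g; rewrite !inE => /orP[] /eqP ->.
- move=> z P hc' hg hs hm hi.
  have Pu : P u by apply: hg; rewrite !inE eqxx orbT.
  have Px : P x by apply: hg; rewrite !inE eqxx.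
  have [PR PS] := PP P hc' hs hm hi Pu.
  apply: hgen => // g; rewrite !inE => /orP[] /eqP -> //.
  have -> : y = R * x ^+ (q ^ k)%N by rewrite /R divfK // expf_neq0.
  by apply: (hm) => //; exact: Pfr.
- move=> z P hc' hg hs hm hi.
  have Pu : P u by apply: hg; rewrite !inE eqxx.
  have Py : P y by apply: hg; rewrite !inE eqxx orbT.
  have [PR PS] := PP P hc' hs hm hi Pu.
  apply: hgen => // g; rewrite !inE => /orP[] /eqP -> //.
  have -> : x = y ^+ (q ^ j)%N / S.
    by rewrite /S invf_div mulrC divfK // expf_neq0.
  by apply: (hm); [exact: Pfr | exact: hi].
Qed.
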